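(* Let $\Omega_n=\dfrac{\pi^{n/2}}{\Gamma\left(\frac n2+1\right)}$ for $n\in\mathbb{N}_0$, and \[ a(n)=\frac12\ln\frac{n}{2\pi}+\frac1{4n}-\frac1{24n^3}+\frac1{20n^5}-\frac{17}{112n^7},\qquad b(n)=a(n)+\frac{31}{36n^9}. \] Then for every $n\in\mathbb{N}$, \[ a(n)<\ln\frac{\Omega_{n-1}}{\Omega_n}<b(n). \]
   Context: $\Omega_n$ is the volume of the unit ball in $\mathbb{R}^n$ ($\Omega_0=1$); $\Gamma$ is Euler's gamma function. *)

(* Defs.v *)
From Stdlib Require Import Reals.
From Coquelicot Require Import Coquelicot.
Open Scope R_scope.

Definition Gamma (x : R) : R :=
  RInt_gen (fun t => Rpower t (x - 1) * exp (- t))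
           (at_right 0) (Rbar_locally p_infty).

Definition Omega (n : nat) : R :=
  Rpower PI (INR n / 2) / Gamma (INR n / 2 + 1).

Definition a_fun (n : nat) : R :=
  let x := INR n in
  / 2 * ln (x / (2 * PI)) + 1 / (4 * x) - 1 / (24 * x ^ 3)
  + 1 / (20 * x ^ 5) - 17 / (112 * x ^ 7).

Definition b_fun (n : nat) : R := a_fun n + 31 / (36 * INR n ^ 9).

(* Main.v *)
Require Import Defs.
From Stdlib Require Import Reals Lra Lia Psatz.
From Coquelicot Require Import Coquelicot.
Open Scope R_scope.

Definition gf (x t : R) : R := Rpower t (x - 1) * exp (- t).

Lemma exp_le_mono (a b : R) : a <= b -> exp a <= exp b.
Proof. intros [H|H]. left; apply exp_increasing; auto. subst; lra. Qed.

Lemma exp_nat_mult (n : nat) (y : R) : exp (INR n * y) = exp y ^ n.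
Proof.
  induction n. simpl. rewrite Rmult_0_l, exp_0. reflexivity.
  rewrite S_INR, Rmult_plus_distr_r, Rmult_1_l, exp_plus, IHn. simpl. ring.
Qed.

Lemma exp_pow_bound (k : nat) (t : R) : 0 <= t -> t ^ k <= INR k ^ k * exp t.
Proof.
  intros Ht. destruct k as [|k].
  - simpl. assert (1 <= exp t) by (pose proof (exp_ineq1_le t); lra). lra.
  - set (K := INR (S k)). assert (HK : 0 < K) by (apply lt_0_INR; lia).
    assert (Hs : exp t = exp (t / K) ^ (S k)).
    { rewrite <- exp_nat_mult. f_equal. unfold K. field. apply not_0_INR; lia. }
    rewrite Hs. 
    replace (t ^ S k) with ((K * (t / K)) ^ S k) by (f_equal; field; lra).
    rewrite Rpow_mult_distr. apply Rmult_le_compat_l. apply pow_le; lra.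
    apply pow_incr. split. apply Rmult_le_pos; [lra| left; apply Rinv_0_lt_compat; lra].
    pose proof (exp_ineq1_le (t/K)). lra.
Qed.

Lemma Rpower_le_pow (t y : R) (m : nat) : 1 <= t -> y <= INR m -> Rpower t y <= t ^ m.
Proof. intros H1 H2. rewrite <- Rpower_pow by lra. apply Rle_Rpower; lra. Qed.

Lemma Rpower_le_1 (t y : R) : 0 < t <= 1 -> 0 <= y -> Rpower t y <= 1.
Proof.
  intros Ht Hy. unfold Rpower. rewrite <- exp_0. apply exp_le_mono.
  assert (ln t <= 0). { rewrite <- ln_1. destruct (Req_dec t 1). subst; lra. left; apply ln_increasing; lra. }
  nra.
Qed.

Lemma nat_above (x : R) : exists m : nat, x <= INR m.
Proof. destruct (INR_archimed 1 x) as [m Hm]; [lra|]. exists m. lra. Qed.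
Lemma Rpower_cont y t : 0 < t -> continuous (fun s => Rpower s y) t.
Proof. intros Ht. apply (@ex_derive_continuous R_AbsRing R_NormedModule). exists (y * Rpower t (y-1)).
  apply is_derive_Reals. apply derivable_pt_lim_power; auto. Qed.

Lemma expo_cont t : continuous (fun s => exp (- s)) t.
Proof. apply (@ex_derive_continuous R_AbsRing R_NormedModule). auto_derive. auto. Qed.

Lemma gf_cont x t : 0 < t -> continuous (gf x) t.
Proof. intros Ht. unfold gf. apply (continuous_mult (fun s => Rpower s (x-1)) (fun s => exp (-s))).
  apply Rpower_cont; auto. apply expo_cont. Qed.

Lemma ex_RInt_pos (f : R -> R) a b : (forall t, 0 < t -> continuous f t) -> 0 < a -> 0 < b -> ex_RInt f a b.
Proof. intros Hc Ha Hb. apply (@ex_RInt_continuous R_CompleteNormedModule). intros z Hz. apply Hc.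
  assert (0 < Rmin a b) by (apply Rmin_glb_lt; auto). lra. Qed.

Lemma gen_ex (f : R -> R) (C : R) :
  (forall t, 0 < t -> continuous f t) ->
  (forall t, 0 < t -> 0 <= f t) ->
  (forall a b, 0 < a -> a <= b -> RInt f a b <= C) ->
  exists l, is_RInt_gen f (at_right 0) (Rbar_locally p_infty) l /\
    (forall a b, 0 < a -> a <= b -> RInt f a b <= l).
Proof.
  intros Hc Hp HC.
  set (E := fun y => exists a b, 0 < a /\ a <= b /\ y = RInt f a b).
  assert (HB : bound E). { exists C. intros y (a & b & Ha & Hab & ->). apply HC; auto. }
  assert (HE : exists y, E y). { exists (RInt f 1 1). exists 1, 1. repeat split; lra. }
  destruct (completeness E HB HE) as [l [Hub Hlub]].
  exists l. split.
  2:{ intros a b Ha Hab. apply Hub. exists a, b; auto. }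
  intros P [eps HP].
  assert (Hex : exists a0 b0, 0 < a0 /\ a0 <= b0 /\ l - eps < RInt f a0 b0).
  { destruct (Classical_Prop.classic (exists a0 b0, 0 < a0 /\ a0 <= b0 /\ l - eps < RInt f a0 b0)) as [H|H]; auto.
    exfalso. assert (l <= l - eps). { apply Hlub. intros y (a & b & Ha & Hab & ->).
      destruct (Rle_dec (RInt f a b) (l - eps)) as [h|h]; auto. exfalso; apply H. exists a, b. repeat split; auto; lra. }
    destruct eps as [e He]; simpl in *; lra. }
  destruct Hex as (a0 & b0 & Ha0 & Hab0 & Hlt).
  apply (Filter_prod _ _ _ (fun a => 0 < a < a0) (fun b => b0 < b)).
  - exists (mkposreal a0 Ha0). intros y Hy Hy0. split; auto.
    unfold ball in Hy; simpl in Hy; unfold AbsRing_ball, abs, minus, plus, opp in Hy; simpl in Hy.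
    rewrite Ropp_0, Rplus_0_r in Hy. apply Rabs_def2 in Hy. lra.
  - exists b0. auto.
  - intros a b [Ha Ha'] Hb. exists (RInt f a b). split.
    + apply (@RInt_correct R_CompleteNormedModule). apply ex_RInt_pos; auto; lra.
    + apply HP. 
      assert (Hle : RInt f a b <= l). { apply Hub. exists a, b. repeat split; lra. }
      assert (Hge : RInt f a0 b0 <= RInt f a b).
      { rewrite <- (@RInt_Chasles R_CompleteNormedModule f a a0 b) by (apply ex_RInt_pos; auto; lra).
        rewrite <- (@RInt_Chasles R_CompleteNormedModule f a0 b0 b) by (apply ex_RInt_pos; auto; lra).
        assert (0 <= RInt f a a0) by (apply RInt_ge_0; [lra|apply ex_RInt_pos; auto; lra| intros; apply Hp; lra]).
        assert (0 <= RInt f b0 b) by (apply RInt_ge_0; [lra|apply ex_RInt_pos; auto; lra| intros; apply Hp; lra]).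
        unfold plus; simpl. lra. }
      unfold ball; simpl; unfold AbsRing_ball, abs, minus, plus, opp; simpl.
      apply Rabs_def1; lra.
Qed.

Lemma int_dom (C a b : R) : 0 <= a <= b -> RInt (fun t => C / (1 + t) ^ 2) a b = C / (1 + a) - C / (1 + b).
Proof.
  intros Hab.
  assert (H : is_RInt (fun t => C / (1 + t) ^ 2) a b (minus ((fun t => - C / (1 + t)) b) ((fun t => - C / (1 + t)) a))).
  { apply (@is_RInt_derive R_CompleteNormedModule (fun t => - C / (1 + t))).
    - intros x Hx. rewrite Rmin_left in Hx by lra. rewrite Rmax_right in Hx by lra.
      auto_derive. lra. field. lra.
    - intros x Hx. rewrite Rmin_left in Hx by lra. rewrite Rmax_right in Hx by lra.
      apply (@ex_derive_continuous R_AbsRing R_NormedModule). auto_derive. intro h; nra. }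
  apply (@is_RInt_unique R_CompleteNormedModule) in H. rewrite H. unfold minus, plus, opp; simpl. field. lra.
Qed.

Lemma gf_bound x : 1 <= x -> exists C, 0 <= C /\ forall t, 0 < t -> gf x t <= C / (1 + t) ^ 2.
Proof.
  intros Hx. destruct (nat_above (x - 1)) as [m Hm].
  set (k := (m + 2)%nat).
  exists (4 * (INR k ^ k + 1)). split.
  { assert (0 <= INR k ^ k) by (apply pow_le; apply pos_INR). lra. }
  intros t Ht. unfold gf.
  assert (Hp : 0 < (1 + t) ^ 2) by (apply pow_lt; lra).
  apply (Rmult_le_reg_r ((1+t)^2)); auto.
  replace (4 * (INR k ^ k + 1) / (1 + t) ^ 2 * (1 + t) ^ 2) with (4 * (INR k ^ k + 1)) by (field; lra).
  assert (He : 0 < exp (- t)) by apply exp_pos.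
  assert (HR : 0 < Rpower t (x - 1)) by (unfold Rpower; apply exp_pos).
  assert (0 <= INR k ^ k) by (apply pow_le; apply pos_INR).
  destruct (Rle_dec t 1) as [h|h].
  - assert (Rpower t (x-1) <= 1) by (apply Rpower_le_1; lra).
    assert (exp (-t) <= 1) by (rewrite <- exp_0; apply exp_le_mono; lra).
    assert (Rpower t (x-1) * exp (-t) <= 1). { apply Rle_trans with (1 * 1); [apply Rmult_le_compat; lra | lra]. }
    assert ((1+t)^2 <= 4) by nra. nra.
  - assert (H1 : Rpower t (x-1) <= t ^ m) by (apply Rpower_le_pow; lra).
    assert (H2 : t ^ k <= INR k ^ k * exp t) by (apply exp_pow_bound; lra).
    assert (H3 : t ^ k = t ^ m * t ^ 2) by (unfold k; rewrite pow_add; reflexivity).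
    assert (H4 : exp t * exp (- t) = 1) by (rewrite <- exp_plus; replace (t + - t) with 0 by ring; apply exp_0).
    assert (H5 : (1+t)^2 <= 4 * t^2) by nra.
    assert (H6 : Rpower t (x-1) * exp (-t) * t ^ 2 <= INR k ^ k).
    { apply Rle_trans with (t ^ m * t ^ 2 * exp (-t)).
      - assert (0 < t^2) by (apply pow_lt; lra). 
        replace (Rpower t (x - 1) * exp (- t) * t ^ 2) with (Rpower t (x - 1) * (exp (- t) * t ^ 2)) by ring.
        replace (t ^ m * t ^ 2 * exp (- t)) with (t ^ m * (exp (- t) * t ^ 2)) by ring.
        apply Rmult_le_compat_r; auto. apply Rmult_le_pos; lra.
      - rewrite <- H3. apply Rle_trans with (INR k ^ k * exp t * exp (-t)).
        apply Rmult_le_compat_r; lra. rewrite Rmult_assoc, H4. lra. }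
    assert (0 <= Rpower t (x-1) * exp (-t)) by (apply Rmult_le_pos; lra).
    apply Rle_trans with (Rpower t (x - 1) * exp (- t) * (4 * t^2)).
    apply Rmult_le_compat_l; lra. nra.
Qed.

Lemma Gamma_spec x : 1 <= x ->
  is_RInt_gen (gf x) (at_right 0) (Rbar_locally p_infty) (Gamma x) /\
  (forall a b, 0 < a -> a <= b -> RInt (gf x) a b <= Gamma x).
Proof.
  intros Hx. destruct (gf_bound x Hx) as (C & HC & Hb).
  destruct (gen_ex (gf x) C) as (l & Hl & Hle).
  - intros; apply gf_cont; auto.
  - intros t Ht. unfold gf. apply Rmult_le_pos; left; [unfold Rpower|]; apply exp_pos.
  - intros a b Ha Hab. apply Rle_trans with (RInt (fun t => C / (1 + t) ^ 2) a b).
    + apply RInt_le; auto. apply ex_RInt_pos; auto; [intros; apply gf_cont; auto| lra].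
      apply (@ex_RInt_continuous R_CompleteNormedModule). intros z Hz.
      rewrite Rmin_left in Hz by lra. rewrite Rmax_right in Hz by lra.
      apply (@ex_derive_continuous R_AbsRing R_NormedModule). auto_derive. intro h; nra.
      intros t Ht; apply Hb; lra.
    + rewrite int_dom by lra. assert (0 <= C / (1 + b)) by (apply Rdiv_le_0_compat; lra).
      assert (C / (1 + a) <= C). { unfold Rdiv. rewrite <- (Rmult_1_r C) at 2. apply Rmult_le_compat_l; auto.
        rewrite <- Rinv_1. apply Rinv_le_contravar; lra. } lra.
  - assert (Gamma x = l). { unfold Gamma. apply (is_RInt_gen_unique (gf x)). exact Hl. }
    rewrite H. auto.
Qed.

Lemma Gamma_pos x : 1 <= x -> 0 < Gamma x.
Proof.
  intros Hx. destruct (Gamma_spec x Hx) as [_ H].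
  apply Rlt_le_trans with (RInt (gf x) 1 2); [|apply H; lra].
  apply RInt_gt_0. lra. intros t Ht. unfold gf. apply Rmult_lt_0_compat; [unfold Rpower|]; apply exp_pos.
  intros t Ht. apply gf_cont. lra.
Qed.

Lemma Rpower_sub1 t y : 0 < t -> Rpower t (y - 1) = Rpower t y / t.
Proof. intros Ht. unfold Rminus. rewrite Rpower_plus, Rpower_Ropp, Rpower_1 by auto. reflexivity. Qed.

Lemma Rpower_small a x : 0 < a <= 1 -> 1 <= x -> Rpower a x <= a.
Proof. intros Ha Hx. replace x with (1 + (x - 1)) by ring. rewrite Rpower_plus, Rpower_1 by lra.
  assert (Rpower a (x-1) <= 1) by (apply Rpower_le_1; lra).
  assert (0 < Rpower a (x-1)) by (unfold Rpower; apply exp_pos). nra. Qed.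

Lemma bnd_large x : 1 <= x -> exists K, 0 <= K /\ forall b, 1 <= b -> Rpower b x * exp (- b) <= K / b.
Proof.
  intros Hx. destruct (nat_above x) as [m Hm]. set (k := S m).
  exists (INR k ^ k). split. apply pow_le, pos_INR.
  intros b Hb. 
  assert (H1 : Rpower b x <= b ^ m) by (apply Rpower_le_pow; lra).
  assert (H2 : b ^ k <= INR k ^ k * exp b) by (apply exp_pow_bound; lra).
  assert (H4 : exp b * exp (- b) = 1) by (rewrite <- exp_plus; replace (b + - b) with 0 by ring; apply exp_0).
  assert (He : 0 < exp (- b)) by apply exp_pos.
  apply (Rmult_le_reg_r b); [lra|].
  replace (INR k ^ k / b * b) with (INR k ^ k) by (field; lra).
  apply Rle_trans with (b ^ k * exp (-b)).
  - unfold k; simpl. replace (Rpower b x * exp (- b) * b) with (Rpower b x * (exp (-b) * b)) by ring.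
    replace (b * b ^ m * exp (- b)) with (b ^ m * (exp (-b) * b)) by ring.
    apply Rmult_le_compat_r; auto. nra.
  - apply Rle_trans with (INR k ^ k * exp b * exp (-b)). apply Rmult_le_compat_r; lra.
    rewrite Rmult_assoc, H4; lra.
Qed.

Lemma Gamma_rec x : 1 <= x -> Gamma (x + 1) = x * Gamma x.
Proof.
  intros Hx.
  set (h := fun t => minus (gf (x + 1) t) (scal x (gf x t))).
  assert (H1 : is_RInt_gen h (at_right 0) (Rbar_locally p_infty) (minus (Gamma (x+1)) (scal x (Gamma x)))).
  { destruct (Gamma_spec (x+1)) as [A _]; [lra|]. destruct (Gamma_spec x) as [B _]; [lra|].
    exact (is_RInt_gen_minus (gf (x+1)) (fun t => scal x (gf x t)) _ _ A (is_RInt_gen_scal (gf x) x _ B)). }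
  assert (Hfin : forall a b, 0 < a -> 0 < b -> is_RInt h a b (Rpower a x * exp (- a) - Rpower b x * exp (- b))).
  { intros a b Ha Hb.
    assert (Hm : 0 < Rmin a b) by (apply Rmin_glb_lt; auto).
    assert (HH := @is_RInt_derive R_CompleteNormedModule (fun t => - (Rpower t x * exp (- t))) h a b).
    replace (Rpower a x * exp (- a) - Rpower b x * exp (- b)) with
      (minus (- (Rpower b x * exp (- b))) (- (Rpower a x * exp (- a)))) by (unfold minus, plus, opp; simpl; ring).
    apply HH.
    - intros t Ht. assert (0 < t) by lra. unfold h, gf, minus, plus, opp, scal; simpl. unfold mult; simpl.
      replace (x + 1 - 1) with x by ring. rewrite Rpower_sub1 by auto.
      unfold Rpower. auto_derive. auto. field. lra.
    - intros t Ht. assert (0 < t) by lra. unfold h.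
      apply (@continuous_minus R_UniformSpace R_AbsRing R_NormedModule). apply gf_cont; auto.
      apply (@continuous_scal R_UniformSpace R_AbsRing R_NormedModule). apply continuous_const. apply gf_cont; auto. }
  assert (H2 : is_RInt_gen h (at_right 0) (Rbar_locally p_infty) 0).
  { destruct (bnd_large x Hx) as (K & HK & HKb).
    intros P [eps HP].
    set (e2 := eps / 2). assert (He2 : 0 < e2) by (unfold e2; destruct eps; simpl; lra).
    apply (Filter_prod _ _ _ (fun a => 0 < a < Rmin 1 e2) (fun b => Rmax 1 (K / e2) < b)).
    - assert (Hm : 0 < Rmin 1 e2) by (apply Rmin_glb_lt; lra).
      exists (mkposreal _ Hm). intros y Hy Hy0. split; auto.
      unfold ball in Hy; simpl in Hy; unfold AbsRing_ball, abs, minus, plus, opp in Hy; simpl in Hy.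
      rewrite Ropp_0, Rplus_0_r in Hy. apply Rabs_def2 in Hy. lra.
    - exists (Rmax 1 (K / e2)). auto.
    - intros a b [Ha Ha'] Hb.
      assert (Ha1 : a <= 1) by (pose proof (Rmin_l 1 e2); lra).
      assert (Ha2 : a < e2) by (pose proof (Rmin_r 1 e2); lra).
      assert (Hb1 : 1 < b) by (pose proof (Rmax_l 1 (K / e2)); lra).
      assert (Hb2 : K / e2 < b) by (pose proof (Rmax_r 1 (K / e2)); lra).
      exists (Rpower a x * exp (- a) - Rpower b x * exp (- b)). split. apply Hfin; lra.
      apply HP. unfold ball; simpl; unfold AbsRing_ball, abs, minus, plus, opp; simpl.
      rewrite Ropp_0, Rplus_0_r.
      assert (A1 : 0 <= Rpower a x * exp (- a)) by (apply Rmult_le_pos; left; [unfold Rpower|]; apply exp_pos).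
      assert (A2 : 0 <= Rpower b x * exp (- b)) by (apply Rmult_le_pos; left; [unfold Rpower|]; apply exp_pos).
      assert (A3 : Rpower a x * exp (- a) <= a).
      { apply Rle_trans with (Rpower a x * 1). apply Rmult_le_compat_l. left; unfold Rpower; apply exp_pos.
        rewrite <- exp_0; apply exp_le_mono; lra. rewrite Rmult_1_r. apply Rpower_small; lra. }
      assert (A4 : Rpower b x * exp (- b) < e2).
      { apply Rle_lt_trans with (K / b). apply HKb; lra.
        apply (Rmult_lt_reg_r b). lra. replace (K / b * b) with K by (field; lra).
        apply (Rmult_lt_reg_r (/ e2)). apply Rinv_0_lt_compat; lra.
        replace (e2 * b * / e2) with b by (field; lra). exact Hb2. }
      apply Rabs_def1; unfold e2 in *; lra. }
  assert (E1 : RInt_gen h (at_right 0) (Rbar_locally p_infty) = minus (Gamma (x+1)) (scal x (Gamma x))) by (apply is_RInt_gen_unique; auto).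
  assert (E2 : RInt_gen h (at_right 0) (Rbar_locally p_infty) = 0) by (apply is_RInt_gen_unique; auto).
  rewrite E1 in E2. unfold minus, plus, opp, scal in E2; simpl in E2. unfold mult in E2; simpl in E2. lra.
Qed.

Lemma gf_exp x t : 0 < t -> gf x t = exp ((x - 1) * ln t - t).
Proof. intros. unfold gf, Rpower. rewrite <- exp_plus. f_equal; ring. Qed.

Lemma Gamma_cs p q : 1 <= p -> 1 <= q -> Gamma ((p + q) / 2) ^ 2 <= Gamma p * Gamma q.
Proof.
  intros Hp Hq. set (m := (p + q) / 2).
  destruct (Gamma_spec p Hp) as [Ap _]. destruct (Gamma_spec q Hq) as [Aq _].
  destruct (Gamma_spec m) as [Am _]; [unfold m; lra|].
  assert (Hquad : forall lam, 0 <= lam ^ 2 * Gamma p + 2 * lam * Gamma m + Gamma q).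
  { intros lam.
    set (k := fun y => plus (plus (scal (lam ^ 2) (gf p y)) (scal (2 * lam) (gf m y))) (gf q y)).
    assert (Hk : is_RInt_gen k (at_right 0) (Rbar_locally p_infty)
                   (plus (plus (scal (lam ^ 2) (Gamma p)) (scal (2 * lam) (Gamma m))) (Gamma q))).
    { exact (is_RInt_gen_plus _ (gf q) _ _
              (is_RInt_gen_plus _ _ _ _ (is_RInt_gen_scal (gf p) (lam^2) _ Ap) (is_RInt_gen_scal (gf m) (2*lam) _ Am)) Aq). }
    assert (Hpos : forall y, 0 < y -> 0 <= k y).
    { intros y Hy. unfold k, plus, scal; simpl. unfold mult; simpl.
      rewrite !gf_exp by auto.
      set (u := exp (((p - 1) * ln y - y) / 2)). set (v := exp (((q - 1) * ln y - y) / 2)).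
      assert (E1 : exp ((p - 1) * ln y - y) = u * u) by (unfold u; rewrite <- exp_plus; f_equal; field).
      assert (E2 : exp ((q - 1) * ln y - y) = v * v) by (unfold v; rewrite <- exp_plus; f_equal; field).
      assert (E3 : exp ((m - 1) * ln y - y) = u * v) by (unfold u, v, m; rewrite <- exp_plus; f_equal; field).
      rewrite E1, E2, E3. match goal with |- 0 <= ?e => replace e with ((lam*u+v)^2) by ring end; apply pow2_ge_0. }
    set (L := plus (plus (scal (lam ^ 2) (Gamma p)) (scal (2 * lam) (Gamma m))) (Gamma q)) in Hk.
    assert (HL : norm L <= L).
    { apply (RInt_gen_norm (Fa := at_right 0) (Fb := Rbar_locally p_infty) k k L L); auto.
      - apply (Filter_prod _ _ _ (fun a => 0 < a < 1) (fun b => 1 < b)).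
        exists (mkposreal 1 Rlt_0_1). intros y Hy Hy0. split; auto.
        unfold ball in Hy; simpl in Hy; unfold AbsRing_ball, abs, minus, plus, opp in Hy; simpl in Hy.
        rewrite Ropp_0, Rplus_0_r in Hy. apply Rabs_def2 in Hy. lra.
        exists 1; auto. intros a b Ha Hb; simpl; lra.
      - apply (Filter_prod _ _ _ (fun a => 0 < a) (fun b => 1 < b)).
        exists (mkposreal 1 Rlt_0_1). intros y Hy Hy0. auto.
        exists 1; auto. intros a b Ha Hb; simpl. intros y Hy.
        unfold norm; simpl; unfold abs; simpl. rewrite Rabs_pos_eq. lra. apply Hpos; lra. }
    unfold L, norm in HL; simpl in HL; unfold abs in HL; simpl in HL.
    unfold plus, scal in HL; simpl in HL; unfold mult in HL; simpl in HL.
    exact (Rle_trans _ _ _ (Rabs_pos _) HL). }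
  assert (Gp : 0 < Gamma p) by (apply Gamma_pos; auto).
  specialize (Hquad (- Gamma m / Gamma p)).
  replace ((- Gamma m / Gamma p) ^ 2 * Gamma p + 2 * (- Gamma m / Gamma p) * Gamma m + Gamma q)
    with ((Gamma p * Gamma q - Gamma m ^ 2) / Gamma p) in Hquad by (field; lra).
  assert (0 <= Gamma p * Gamma q - Gamma m ^ 2).
  { apply (Rmult_le_reg_r (/ Gamma p)). apply Rinv_0_lt_compat; auto. rewrite Rmult_0_l. exact Hquad. }
  lra.
Qed.
Lemma ln_lo u : 0 <= u -> u - u^2/2 + u^3/3 - u^4/4 <= ln (1 + u).
Proof.
  intros Hu.
  destruct (MVT_gen (fun x => ln (1 + x) - (x - x^2/2 + x^3/3 - x^4/4)) 0 u (fun x => x^4 / (1 + x))) as [c [Hc Heq]].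
  - intros x Hx. rewrite Rmin_left in Hx by lra. rewrite Rmax_right in Hx by lra.
    auto_derive. lra. field. lra.
  - intros x Hx. rewrite Rmin_left in Hx by lra. rewrite Rmax_right in Hx by lra.
    match goal with |- continuity_pt ?f ?x => apply (proj2 (continuity_pt_filterlim f x)); apply (@ex_derive_continuous R_AbsRing R_NormedModule f) end. auto_derive. lra.
  - rewrite Rmin_left in Hc by lra. rewrite Rmax_right in Hc by lra.
    rewrite Rplus_0_r, ln_1 in Heq.
    assert (0 <= c ^ 4 / (1 + c)) by (apply Rdiv_le_0_compat; [apply pow_le|]; lra).
    assert (0 <= c ^ 4 / (1 + c) * (u - 0)) by (apply Rmult_le_pos; lra).
    lra.
Qed.

Lemma ln_hi u : 0 <= u -> ln (1 + u) <= u - u^2/2 + u^3/3 - u^4/4 + u^5/5.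
Proof.
  intros Hu.
  destruct (MVT_gen (fun x => (x - x^2/2 + x^3/3 - x^4/4 + x^5/5) - ln (1 + x)) 0 u (fun x => x^5 / (1 + x))) as [c [Hc Heq]].
  - intros x Hx. rewrite Rmin_left in Hx by lra. rewrite Rmax_right in Hx by lra.
    auto_derive. lra. field. lra.
  - intros x Hx. rewrite Rmin_left in Hx by lra. rewrite Rmax_right in Hx by lra.
    match goal with |- continuity_pt ?f ?x => apply (proj2 (continuity_pt_filterlim f x)); apply (@ex_derive_continuous R_AbsRing R_NormedModule f) end. auto_derive. lra.
  - rewrite Rmin_left in Hc by lra. rewrite Rmax_right in Hc by lra.
    rewrite Rplus_0_r, ln_1 in Heq.
    assert (0 <= c ^ 5 / (1 + c)) by (apply Rdiv_le_0_compat; [apply pow_le|]; lra).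
    assert (0 <= c ^ 5 / (1 + c) * (u - 0)) by (apply Rmult_le_pos; lra).
    lra.
Qed.

Definition Rr (z : R) : R := 1 / (4 * z) - 1 / (24 * z ^ 3) + 1 / (20 * z ^ 5) - 17 / (112 * z ^ 7).

Lemma polyD y : 1 <= y ->
  0 < / 2 * (/(y*(y+2)) - (/(y*(y+2)))^2/2 + (/(y*(y+2)))^3/3 - (/(y*(y+2)))^4/4) + Rr (y + 2) - Rr y.
Proof.
  intros Hy. set (m := y - 1). assert (Hm : 0 <= m) by (unfold m; lra).
  replace y with (m + 1) by (unfold m; ring).
  replace (/ 2 * (/((m+1)*((m+1)+2)) - (/((m+1)*((m+1)+2)))^2/2 + (/((m+1)*((m+1)+2)))^3/3 - (/((m+1)*((m+1)+2)))^4/4) + Rr ((m+1) + 2) - Rr (m+1))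
    with ((9101 + 17696 * m + 13048 * m^2 + 4312 * m^3 + 539 * m^4) / (35 * (m+1)^7 * (m+3)^7)).
  - apply Rdiv_lt_0_compat. assert (0 <= m^2) by (apply pow_le; lra). assert (0 <= m^3) by (apply pow_le; lra).
    assert (0 <= m^4) by (apply pow_le; lra). lra.
    repeat apply Rmult_lt_0_compat; try lra; apply pow_lt; lra.
  - unfold Rr. field. lra.
Qed.

Lemma polyE y : 1 <= y ->
  / 2 * (/(y*(y+2)) - (/(y*(y+2)))^2/2 + (/(y*(y+2)))^3/3 - (/(y*(y+2)))^4/4 + (/(y*(y+2)))^5/5) + Rr (y + 2) - Rr y
  + 31 / (36 * (y + 2) ^ 9) - 31 / (36 * y ^ 9) < 0.
Proof.
  intros Hy. set (m := y - 1). assert (Hm : 0 <= m) by (unfold m; lra).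
  replace y with (m + 1) by (unfold m; ring).
  match goal with |- ?e < 0 => replace e with
   (- ((919802 + 2520360 * m + 2926890 * m^2 + 1844592 * m^3 + 665694 * m^4 + 130536 * m^5 + 10878 * m^6) / (63 * (m+1)^9 * (m+3)^9))) end.
  - assert (0 < (919802 + 2520360 * m + 2926890 * m^2 + 1844592 * m^3 + 665694 * m^4 + 130536 * m^5 + 10878 * m^6) / (63 * (m+1)^9 * (m+3)^9)); [|lra].
    apply Rdiv_lt_0_compat. assert (0 <= m^2) by (apply pow_le; lra). assert (0 <= m^3) by (apply pow_le; lra).
    assert (0 <= m^4) by (apply pow_le; lra). assert (0 <= m^5) by (apply pow_le; lra). assert (0 <= m^6) by (apply pow_le; lra). lra.
    repeat apply Rmult_lt_0_compat; try lra; apply pow_lt; lra.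
  - unfold Rr. field. lra.
Qed.

Definition A (y : R) : R := / 2 * ln (y / (2 * PI)) + 1 / (4 * y) - 1 / (24 * y ^ 3)
  + 1 / (20 * y ^ 5) - 17 / (112 * y ^ 7).
Definition B (y : R) : R := A y + 31 / (36 * y ^ 9).

Lemma a_A n : a_fun n = A (INR n). Proof. reflexivity. Qed.
Lemma b_B n : b_fun n = B (INR n). Proof. reflexivity. Qed.

Lemma A_split y : 0 < y -> A y = / 2 * (ln y - ln (2 * PI)) + Rr y.
Proof. intros Hy. unfold A, Rr. rewrite ln_div; [ring| lra |]. pose proof PI_RGT_0; lra. Qed.

Lemma ln_key y : 0 < y -> 2 * ln (y + 1) = ln y + ln (y + 2) + ln (1 + / (y * (y + 2))).
Proof.
  intros Hy.
  assert (Hu : 0 < 1 + / (y * (y + 2))). { assert (0 < / (y * (y+2))) by (apply Rinv_0_lt_compat; nra). lra. }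
  rewrite <- ln_mult, <- ln_mult by (try apply Rmult_lt_0_compat; lra).
  replace (2 * ln (y + 1)) with (ln ((y+1)^2)) by (rewrite ln_pow by lra; simpl; ring).
  f_equal. field. lra.
Qed.

Lemma Dreal y : 1 <= y -> 0 < ln ((y + 1) / (2 * PI)) - ln ((y + 2) / (2 * PI)) - A y + A (y + 2).
Proof.
  intros Hy. pose proof PI_RGT_0.
  rewrite !ln_div by lra. rewrite !A_split by lra.
  assert (Hk := ln_key y ltac:(lra)).
  assert (Hu : 0 <= / (y * (y + 2))) by (left; apply Rinv_0_lt_compat; nra).
  assert (Hl := ln_lo _ Hu). assert (Hp := polyD y Hy). lra.
Qed.

Lemma Ereal y : 1 <= y -> ln ((y + 1) / (2 * PI)) - ln ((y + 2) / (2 * PI)) - B y + B (y + 2) < 0.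
Proof.
  intros Hy. pose proof PI_RGT_0. unfold B.
  rewrite !ln_div by lra. rewrite !A_split by lra.
  assert (Hk := ln_key y ltac:(lra)).
  assert (Hu : 0 <= / (y * (y + 2))) by (left; apply Rinv_0_lt_compat; nra).
  assert (Hl := ln_hi _ Hu). assert (Hp := polyE y Hy). lra.
Qed.

Lemma Rr_le y : 1 <= y -> Rr y <= 1 / y /\ - Rr y <= / 2 * (1 / y).
Proof.
  intros Hy. set (z := / y). assert (Hz : 0 < z <= 1).
  { unfold z; split. apply Rinv_0_lt_compat; lra. rewrite <- Rinv_1. apply Rinv_le_contravar; lra. }
  assert (E : Rr y = z / 4 - z^3 / 24 + z^5 / 20 - 17 * z^7 / 112) by (unfold Rr, z; field; lra).
  replace (1 / y) with z by (unfold z; field; lra). rewrite E.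
  assert (0 <= z^3 <= z). { split. apply pow_le; lra. replace (z^3) with (z * (z*z)) by ring. assert (z*z <= 1) by nra. nra. }
  assert (0 <= z^5 <= z). { split. apply pow_le; lra. replace (z^5) with (z * (z^2*z^2)) by ring. assert (z^2 <= 1) by nra. assert (0<=z^2) by nra. nra. }
  assert (0 <= z^7 <= z). { split. apply pow_le; lra. replace (z^7) with (z * (z^3*z^3)) by ring. nra. }
  lra.
Qed.

Definition Lr (n : nat) : R := ln (Omega (n - 1) / Omega n).

Lemma L_form n : (1 <= n)%nat ->
  Lr n = ln (Gamma (INR n / 2 + 1)) - ln (Gamma (INR n / 2 + / 2)) - / 2 * ln PI.
Proof.
  intros Hn. unfold Lr, Omega. rewrite minus_INR by auto. simpl (INR 1).
  assert (H1 : 1 <= INR n) by (apply (le_INR 1); auto).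
  replace ((INR n - 1) / 2 + 1) with (INR n / 2 + / 2) by field.
  assert (G1 : 0 < Gamma (INR n / 2 + / 2)) by (apply Gamma_pos; lra).
  assert (G2 : 0 < Gamma (INR n / 2 + 1)) by (apply Gamma_pos; lra).
  assert (P1 : forall z, 0 < Rpower PI z) by (intros; unfold Rpower; apply exp_pos).
  assert (P2 : forall z, ln (Rpower PI z) = z * ln PI) by (intros; unfold Rpower; apply ln_exp).
  rewrite ln_div by (apply Rdiv_lt_0_compat; auto).
  rewrite !ln_div by auto. rewrite !P2. field.
Qed.

Lemma L_rec n : (1 <= n)%nat -> Lr n + Lr (S n) = ln ((INR n + 1) / (2 * PI)).
Proof.
  intros Hn. rewrite !L_form by lia. rewrite S_INR.
  assert (H1 : 1 <= INR n) by (apply (le_INR 1); auto). pose proof PI_RGT_0.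
  set (x := INR n / 2).
  replace ((INR n + 1) / 2 + 1) with (x + / 2 + 1) by (unfold x; field).
  replace ((INR n + 1) / 2 + / 2) with (x + 1) by (unfold x; field).
  rewrite (Gamma_rec (x + / 2)) by (unfold x; lra).
  assert (G1 : 0 < Gamma (x + / 2)) by (apply Gamma_pos; unfold x; lra).
  rewrite ln_mult; [|unfold x; lra|exact G1].
  replace ((INR n + 1) / (2 * PI)) with ((x + / 2) / PI) by (unfold x; field; lra).
  rewrite ln_div by (unfold x; lra). field.
Qed.

Lemma L_bounds n : (2 <= n)%nat ->
  / 2 * ln (INR n / (2 * PI)) <= Lr n <= / 2 * ln ((INR n + 1) / (2 * PI)).
Proof.
  intros Hn. rewrite L_form by lia. pose proof PI_RGT_0.
  assert (H2 : 2 <= INR n) by (apply (le_INR 2); auto).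
  set (x := INR n / 2). assert (Hx : 1 <= x) by (unfold x; lra).
  assert (G0 : 0 < Gamma x) by (apply Gamma_pos; lra).
  assert (G1 : 0 < Gamma (x + / 2)) by (apply Gamma_pos; lra).
  assert (G2 : 0 < Gamma (x + 1)) by (apply Gamma_pos; lra).
  assert (R1 := Gamma_rec x Hx). assert (R2 := Gamma_rec (x + / 2) ltac:(lra)).
  assert (C1 := Gamma_cs x (x + 1) Hx ltac:(lra)).
  replace ((x + (x + 1)) / 2) with (x + / 2) in C1 by field.
  assert (C2 := Gamma_cs (x + / 2) (x + / 2 + 1) ltac:(lra) ltac:(lra)).
  replace ((x + / 2 + (x + / 2 + 1)) / 2) with (x + 1) in C2 by field.
  rewrite R2 in C2. rewrite R1 in C1.
  apply ln_le in C1; [|apply pow_lt; auto]. apply ln_le in C2; [|apply pow_lt; auto].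
  rewrite ln_pow in C1, C2 by auto.
  rewrite !ln_mult in C1 by (try apply Rmult_lt_0_compat; lra). rewrite !ln_mult in C2 by (try apply Rmult_lt_0_compat; lra).
  replace (INR n / (2 * PI)) with (x / PI) by (unfold x; field; lra).
  replace ((INR n + 1) / (2 * PI)) with ((x + / 2) / PI) by (unfold x; field; lra).
  rewrite !ln_div by lra. simpl (INR 2) in *.
  assert (ln (Gamma (x + 1)) = ln x + ln (Gamma x)) by (rewrite R1, ln_mult; lra).
  split; lra.
Qed.

Definition Fs (n : nat) : R := Lr n - a_fun n.
Definition Gs (n : nat) : R := Lr n - b_fun n.

Lemma INR_SS n : INR (n + 2) = INR n + 2.
Proof. rewrite plus_INR. simpl. ring. Qed.

Lemma L_step n : (1 <= n)%nat -> Lr n - Lr (n + 2) = ln ((INR n + 1) / (2 * PI)) - ln ((INR n + 2) / (2 * PI)).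
Proof.
  intros Hn. assert (H1 := L_rec n Hn). assert (H2 := L_rec (S n) ltac:(lia)).
  replace (n + 2)%nat with (S (S n)) by lia. rewrite S_INR in H2.
  replace (INR n + 1 + 1) with (INR n + 2) in H2 by ring. lra.
Qed.

Lemma F_step n : (1 <= n)%nat -> Fs n - Fs (n + 2) > 0.
Proof.
  intros Hn. unfold Fs. rewrite !a_A, INR_SS.
  assert (H := L_step n Hn). assert (H1 : 1 <= INR n) by (apply (le_INR 1); auto).
  assert (HD := Dreal (INR n) H1). lra.
Qed.

Lemma G_step n : (1 <= n)%nat -> Gs n - Gs (n + 2) < 0.
Proof.
  intros Hn. unfold Gs. rewrite !b_B, INR_SS.
  assert (H := L_step n Hn). assert (H1 : 1 <= INR n) by (apply (le_INR 1); auto).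
  assert (HD := Ereal (INR n) H1). lra.
Qed.

Lemma F_crude n : (2 <= n)%nat -> - (1 / INR n) <= Fs n.
Proof.
  intros Hn. unfold Fs. rewrite a_A. pose proof PI_RGT_0.
  assert (H2 : 2 <= INR n) by (apply (le_INR 2); auto).
  destruct (L_bounds n Hn) as [Lo Hi]. rewrite A_split by lra.
  rewrite ln_div in Lo by lra. destruct (Rr_le (INR n) ltac:(lra)). lra.
Qed.

Lemma G_crude n : (2 <= n)%nat -> Gs n <= 1 / INR n.
Proof.
  intros Hn. unfold Gs. rewrite b_B. unfold B. pose proof PI_RGT_0.
  assert (H2 : 2 <= INR n) by (apply (le_INR 2); auto).
  destruct (L_bounds n Hn) as [Lo Hi]. rewrite A_split by lra.
  rewrite ln_div in Hi by lra. destruct (Rr_le (INR n) ltac:(lra)).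
  assert (Hln : ln (INR n + 1) <= ln (INR n) + 1 / INR n).
  { replace (INR n + 1) with (INR n * (1 + 1 / INR n)) by (field; lra).
    rewrite ln_mult by (try apply Rplus_lt_0_compat; try apply Rdiv_lt_0_compat; lra).
    assert (ln (1 + 1 / INR n) <= 1 / INR n).
    { rewrite <- (ln_exp (1 / INR n)) at 2. apply ln_le.
      assert (0 < 1 / INR n) by (apply Rdiv_lt_0_compat; lra). lra. apply exp_ineq1_le. }
    lra. }
  assert (0 <= 31 / (36 * INR n ^ 9)) by (apply Rdiv_le_0_compat; [lra| apply Rmult_lt_0_compat; [lra| apply pow_lt; lra]]).
  lra.
Qed.

Lemma far (f : nat -> R) (n : nat) :
  (forall k, f (n + 2 * k)%nat <= f n) ->
  (forall N, (2 <= N)%nat -> - (1 / INR N) <= f N) -> 0 <= f n.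
Proof.
  intros Hmono Hcr. destruct (Rle_lt_dec 0 (f n)) as [h|h]; auto. exfalso.
  destruct (INR_archimed (- f n) 1) as [k0 Hk0]; [lra|].
  set (N := (n + 2 * S k0)%nat).
  assert (HN : (2 <= N)%nat) by (unfold N; lia).
  assert (HkN : INR k0 <= INR N) by (apply le_INR; unfold N; lia).
  assert (HN0 : 2 <= INR N) by (apply (le_INR 2); auto).
  assert (A1 := Hmono (S k0)). assert (A2 := Hcr N HN). fold N in A1.
  assert (A3 : - 1 <= INR N * f N).
  { replace (-1) with (INR N * (- (1 / INR N))) by (field; lra). apply Rmult_le_compat_l; lra. }
  nra.
Qed.

Lemma F_pos n : (1 <= n)%nat -> 0 < Fs n.
Proof.
  intros Hn.
  assert (Hnn : forall m, (1 <= m)%nat -> 0 <= Fs m).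
  { intros m Hm. apply far.
    - induction k. replace (m + 2 * 0)%nat with m by lia. lra.
      replace (m + 2 * S k)%nat with ((m + 2 * k) + 2)%nat by lia.
      assert (H := F_step (m + 2 * k) ltac:(lia)). lra.
    - apply F_crude. }
  assert (H := F_step n Hn). assert (H2 := Hnn (n + 2)%nat ltac:(lia)). lra.
Qed.

Lemma G_neg n : (1 <= n)%nat -> Gs n < 0.
Proof.
  intros Hn.
  assert (Hnn : forall m, (1 <= m)%nat -> 0 <= - Gs m).
  { intros m Hm. apply (far (fun k => - Gs k)).
    - induction k. replace (m + 2 * 0)%nat with m by lia. lra.
      replace (m + 2 * S k)%nat with ((m + 2 * k) + 2)%nat by lia.
      assert (H := G_step (m + 2 * k) ltac:(lia)). lra.
    - intros N HN. assert (H := G_crude N HN). lra. }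
  assert (H := G_step n Hn). assert (H2 := Hnn (n + 2)%nat ltac:(lia)). lra.
Qed.

Theorem theorem7 (n : nat) (hn : (1 <= n)%nat) :
  a_fun n < ln (Omega (n - 1) / Omega n) < b_fun n.
Proof.
  assert (H1 := F_pos n hn). assert (H2 := G_neg n hn). unfold Fs, Gs, Lr in *. lra.
Qed.
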